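(* Let $G$ be a finite abelian group, $H\le G$, and let $m_I\ge0$ be integers for $I\le H$. Let $A=\coprod_{I\le H}\coprod_{m_I}G/I$ (the disjoint union of $m_I$ copies of $G/I$ for each $I\le H$) and let $\mathrm{Pr}:A\to G/H$ be the $G$-map given on each copy of $G/I$ by the natural projection $gI\mapsto gH$. Let $S$ be the set of maps $s:G/H\to A$ with $\mathrm{Pr}\circ s=\mathrm{id}_{G/H}$, with $G$-action $({}^g s)(x)=g\,s(g^{-1}x)$, and for $s\in S$ let $G_s$ be its stabilizer. Then for every $K\le G$, $$\#\{s\in S\mid K\le G_s\}=\Big(\sum_{K\cap H\le I\le H}m_I\,|H:I|\Big)^{|G:KH|}.$$ Consequently, the numbers $c(K)=\#\{s\in S\mid G_s=K\}$ satisfy $c(K)=\big(\sum_{K\cap H\le I\le H}m_I|H:I|\big)^{|G:KH|}-\sum_{K<L\le G}c(L)$.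
   Context: $G$-sets are finite sets with a left action of the finite group $G$; $G/I$ denotes the set of left cosets with the left multiplication action. $|H:I|$ is the index, and $KH$ the subgroup generated by $K$ and $H$ (a product since $G$ is abelian). *)

(* Defs.v *)
From HB Require Import structures.
From mathcomp Require Import all_boot all_order all_fingroup.
Set Implicit Arguments. Unset Strict Implicit. Unset Printing Implicit Defensive.
Local Open Scope group_scope.

(* Copy labels: a copy of G/I is labelled by (I, j) with j < m I. *)
Definition copyT (gT : finGroupType) (m : {group gT} -> nat) : finType :=
  {I : {group gT} & 'I_(m I)}.

(* Elements of A are pairs (label (I,j), left coset C of I in G). *)
Definition Aelt (gT : finGroupType) (m : {group gT} -> nat) : finType :=
  (copyT m * {set gT})%type.

Definition inA (gT : finGroupType) (G H : {set gT}) (m : {group gT} -> nat)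
  (a : Aelt m) : bool :=
  (tag a.1 \subset H) && (a.2 \in lcosets (tag a.1) G).

(* The projection Pr : A -> G/H, xI |-> xH (= (xI) H as I <= H). *)
Definition Pr (gT : finGroupType) (H : {set gT}) (m : {group gT} -> nat)
  (a : Aelt m) : {set gT} := a.2 * H.

Definition actA (gT : finGroupType) (m : {group gT} -> nat) (g : gT)
  (a : Aelt m) : Aelt m := (a.1, g *: a.2).

(* Maps G/H -> A are encoded as finite functions on {set gT}, with value
   None outside G/H (= lcosets H G) and Some a on G/H. *)
Definition secT (gT : finGroupType) (m : {group gT} -> nat) : finType :=
  {ffun {set gT} -> option (Aelt m)}.

Definition is_section (gT : finGroupType) (G H : {set gT})
  (m : {group gT} -> nat) (s : secT m) : bool :=
  [forall C : {set gT},
     if C \in lcosets H G then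
       match s C with
       | Some a => inA G H a && (Pr H a == C)
       | None => false
       end
     else s C == None].

Definition S (gT : finGroupType) (G H : {set gT}) (m : {group gT} -> nat)
  : {set secT m} := [set s | is_section G H s].

Definition actS (gT : finGroupType) (G H : {set gT}) (m : {group gT} -> nat)
  (g : gT) (s : secT m) : secT m :=
  [ffun C => if C \in lcosets H G then omap (actA g) (s (g^-1 *: C)) else None].

Definition stabS (gT : finGroupType) (G H : {set gT}) (m : {group gT} -> nat)
  (s : secT m) : {set gT} := [set g in G | actS G H g s == s].

Definition cnt (gT : finGroupType) (G H : {set gT}) (m : {group gT} -> nat)
  (K : {set gT}) : nat := #|[set s in S G H m | stabS G H s == K]|.

(* Main.v *)
Require Import Defs.
From HB Require Import structures.
From mathcomp Require Import all_boot all_order all_fingroup.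
Set Implicit Arguments. Unset Strict Implicit. Unset Printing Implicit Defensive.

Lemma card_family_prod (aT rT : finType) (F : aT -> pred rT) :
  #|(family F : simpl_pred {ffun aT -> rT})| = \prod_(x : aT) #|F x|.
Proof.
rewrite card_family /image_mem -[in RHS]big_enum /=.
elim: (enum aT) => [|x s IH] /=; first by rewrite big_nil.
by rewrite big_cons IH cardE.
Qed.

Section Main.
Local Open Scope group_scope.
Variables (gT : finGroupType) (G H : {group gT}) (m : {group gT} -> nat).
Hypotheses (hG : abelian G) (hH : H \subset G).

Lemma commG x y : x \in G -> y \in G -> x * y = y * x.
Proof. by move=> Gx Gy; apply: (centsP hG x Gx y Gy). Qed.

Lemma lcosetMA (x : gT) (A B : {set gT}) : (x *: A) * B = x *: (A * B).
Proof. by rewrite mulgA. Qed.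

Lemma fixcoset (I : {group gT}) y k : I \subset G -> y \in G -> k \in G ->
  (k *: (y *: I) == y *: I) = (k \in I).
Proof.
move=> sIG Gy Gk; rewrite -lcosetM commG // lcosetM.
apply/eqP/idP => [/lcoset_inj E | kI]; last by rewrite lcoset_id.
by rewrite -E mem_lcoset mulVg group1.
Qed.

Lemma card_fibcoset (I : {group gT}) r : I \subset H -> r \in G ->
  #|[set C in lcosets I G | C * H == r *: H]| = #|H : I|.
Proof.
move=> sIH Gr; have sIG := subset_trans sIH hH.
have -> : [set C in lcosets I G | C * H == r *: H] = (fun C => r *: C) @: lcosets I H.
  apply/setP => C; rewrite inE; apply/andP/imsetP.
  - case=> /lcosetsP[y Gy ->]; rewrite lcosetMA mulSGid // => /eqP E.
    have yrH : y \in r *: H by rewrite -E mem_lcoset mulVg group1.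
    exists ((r^-1 * y) *: I); last by rewrite -lcosetM mulKVg.
    by apply/lcosetsP; exists (r^-1 * y); rewrite // -mem_lcoset.
  - case=> D /lcosetsP[h Hh ->] ->; rewrite -lcosetM; split.
      by apply/lcosetsP; exists (r * h); rewrite // groupM // (subsetP hH).
    by rewrite lcosetMA mulSGid // lcosetM lcoset_id.
by rewrite card_imset ?card_lcosets //; apply: lcoset_inj.
Qed.

Variables (K : {group gT}).
Hypothesis hK : K \subset G.

Definition fixedA (a : Aelt m) := [forall k in K :&: H, k *: a.2 == a.2].
Definition fib r := [set a : Aelt m | [&& inA G H a, Pr H a == r *: H & fixedA a]].
Definition N0 := \sum_(I : {group gT} | (K :&: H \subset I) && (I \subset H)) m I * #|H : I|.

Lemma fib_inner r (u : copyT m) : r \in G ->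
  \sum_(C : {set gT}) (if (u, C) \in fib r then 1 else 0) =
  if (K :&: H \subset tag u) && (tag u \subset H) then #|H : tag u| else 0.
Proof.
move=> Gr; set I := tag u.
have [sIH|nIH] := boolP (I \subset H); last first.
  rewrite andbF big1 // => C _; by rewrite inE /inA /= (negbTE nIH).
have sIG := subset_trans sIH hH.
have [sKI|nKI] := boolP (K :&: H \subset I); last first.
  apply: big1 => C _; rewrite inE /inA /= sIH /=.
  case: (boolP (C \in lcosets I G)) => //= /lcosetsP[y Gy ->].
  have [k KHk nIk] : exists2 k, k \in K :&: H & k \notin I.
    by move/subsetPn: nKI => [k ? ?]; exists k.
  case: (_ == _) => //=; case: ifP => // /forallP /(_ k); rewrite KHk /=.
  rewrite fixcoset //; first by rewrite (negbTE nIk).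
  by move: KHk; rewrite inE => /andP[/(subsetP hK)].
rewrite /= -(card_fibcoset sIH Gr) -sum1_card [RHS]big_mkcond /=.
apply: eq_bigr => C _; rewrite !inE /inA /= sIH /=.
case: (boolP (C \in lcosets I G)) => //= /lcosetsP[y Gy ->].
case: (_ == _) => //=; suff -> : fixedA (u, y *: I) by [].
apply/forallP => k; apply/implyP => KHk; rewrite /= fixcoset //.
  exact: (subsetP sKI).
by move: KHk; rewrite inE => /andP[/(subsetP hK)].
Qed.


Lemma card_tag (I : {group gT}) : #|[set u : copyT m | tag u == I]| = m I.
Proof.
have -> : [set u : copyT m | tag u == I] =
   [set Tagged (fun J : {group gT} => 'I_(m J)) j | j : 'I_(m I)].
  apply/setP => u; rewrite inE; apply/eqP/imsetP => [E | [j _ ->]] //.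
  by exists (etagged E); rewrite ?etaggedK.
rewrite card_imset ?card_ord //; exact: eq_from_Tagged.
Qed.

Lemma card_fib r : r \in G -> #|fib r| = N0.
Proof.
move=> Gr; rewrite -sum1_card big_mkcond /=.
have -> : \sum_(a : Aelt m) (if a \in fib r then 1 else 0) =
  \sum_(u : copyT m) \sum_(C : {set gT}) (if (u, C) \in fib r then 1 else 0).
  by rewrite pair_big; apply: eq_bigr => -[u C].
under eq_bigr => u _ do rewrite fib_inner //.
rewrite (partition_big (fun u : copyT m => tag u) xpredT) //=.
rewrite /N0 [RHS]big_mkcond /=; apply: eq_bigr => I _.
under eq_bigr => u /eqP -> do [].
rewrite sum_nat_const.
have -> : #|[pred u : copyT m | tag u == I]| = m I.
  by rewrite -card_tag; apply: eq_card => u; rewrite inE.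
by case: ifP; rewrite ?muln0.
Qed.


Local Notation J := (K <*> H)%G.

Lemma JG : J \subset G. Proof. by rewrite join_subG hK hH. Qed.

Lemma JE : (J : {set gT}) = K * H.
Proof.
apply: comm_joingE; apply: centC.
apply: subset_trans hK (subset_trans hG (centS hH)).
Qed.

Lemma X_mul (g : gT) C : g \in G -> C \in lcosets H G -> g *: C \in lcosets H G.
Proof.
move=> Gg /lcosetsP[x Gx ->]; apply/lcosetsP; exists (g * x); rewrite ?groupM //.
by rewrite lcosetM.
Qed.

Lemma L1 C : C \in lcosets H G -> C * J = (repr (C * J)) *: J /\
   C * J \in lcosets J G /\ repr (C * J) \in G.
Proof.
move=> /lcosetsP[x Gx ->]; rewrite lcosetMA mulSGid ?joing_subr //.
have rJ : repr (x *: J) \in x *: J by apply: mem_repr (x) _; rewrite mem_lcoset mulVg group1.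
split; first by apply/esym/lcoset_eqP.
split; first by apply/lcosetsP; exists x.
move/lcosetP: rJ => [j Jj ->]; rewrite groupM //; exact: (subsetP JG).
Qed.

Lemma L2 C : C \in lcosets H G ->
  exists2 k, k \in K & C = k *: (repr (C * J) *: H).
Proof.
move=> XC; have [E [_ Gr]] := L1 XC.
move: XC => /lcosetsP[x Gx EC].
have CJ : C * J = x *: J by rewrite EC lcosetMA mulSGid ?joing_subr.
have : repr (C * J) \in x *: J.
  by rewrite CJ; apply: (@mem_repr _ _ x); rewrite mem_lcoset mulVg group1.
move/lcosetP=> [j]; rewrite JE => /mulsgP[k h Kk Hh ->] Er.
have Gk : k \in G by apply: (subsetP hK).
have Gh : h \in G by apply: (subsetP hH).
exists k^-1; first by rewrite groupV.
rewrite Er EC -!lcosetM; apply/lcoset_eqP.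
rewrite mem_lcoset [x * (k * h)]mulgA (commG Gx Gk) !mulgA mulVg mul1g invMg mulgKV.
by rewrite groupV.
Qed.

Lemma actA_wd k k' r (a : Aelt m) : k \in K -> k' \in K -> r \in G ->
  k *: (r *: H) = k' *: (r *: H) -> fixedA a -> actA k a = actA k' a.
Proof.
move=> Kk Kk' Gr E /forallP fa.
have Gk : k \in G by apply: (subsetP hK).
have Gk' : k' \in G by apply: (subsetP hK).
have : (k'^-1 * k) \in H.
  by rewrite -(fixcoset hH Gr) ?groupM ?groupV // lcosetM E lcosetK.
move=> Hk; have := fa (k'^-1 * k); rewrite inE groupM ?groupV //= Hk /= lcosetM.
move/eqP=> E2; rewrite /actA; congr (_, _).
by rewrite -[in RHS]E2 lcosetKV.
Qed.

Lemma L4 k0 C : k0 \in K -> C \in lcosets H G -> (k0 *: C) * J = C * J.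
Proof.
move=> Kk /lcosetsP[x Gx ->].
have Gk : k0 \in G by apply: (subsetP hK).
rewrite -lcosetM !lcosetMA mulSGid ?joing_subr // commG // lcosetM.
by rewrite [k0 *: J]lcoset_id // (subsetP (joing_subl K H)).
Qed.

Lemma L5 D : D \in lcosets J G -> repr D \in G /\ (repr D *: H) * J = D
   /\ repr D *: H \in lcosets H G.
Proof.
move=> /lcosetsP[y Gy ->].
have rD : repr (y *: J) \in y *: J.
  by apply: (@mem_repr _ _ y); rewrite mem_lcoset mulVg group1.
have Gr : repr (y *: J) \in G.
  by move/lcosetP: rD => [j Jj ->]; rewrite groupM //; exact: (subsetP JG).
split=> //; split; last by apply/lcosetsP; exists (repr (y *: J)).
by rewrite lcosetMA mulSGid ?joing_subr //; apply/lcoset_eqP.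
Qed.

Lemma secP_in s C : s \in S G H m -> C \in lcosets H G ->
  exists a, [/\ s C = Some a, inA G H a & Pr H a = C].
Proof.
rewrite inE => /forallP /(_ C) + XC; rewrite XC.
by case: (s C) => // a /andP[ia /eqP pa]; exists a.
Qed.

Lemma secP_out s C : s \in S G H m -> C \notin lcosets H G -> s C = None.
Proof. by rewrite inE => /forallP /(_ C) + XC; rewrite (negbTE XC) => /eqP. Qed.

Lemma actA1 (a : Aelt m) : actA 1 a = a.
Proof. by case: a => u C; rewrite /actA lcoset1. Qed.

Lemma actAM g h (a : Aelt m) : actA (g * h) a = actA g (actA h a).
Proof. by case: a => u C; rewrite /actA lcosetM. Qed.

Lemma fixP s : s \in S G H m ->
  (K \subset stabS G H s) <->
  (forall k C, k \in K -> C \in lcosets H G -> s (k *: C) = omap (actA k) (s C)).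
Proof.
move=> Ss; split.
  move=> /subsetP sK k C Kk XC; have := sK k Kk; rewrite inE => /andP[Gk /eqP E].
  by rewrite -{1}E ffunE X_mul // lcosetK.
move=> fx; apply/subsetP => k Kk.
have Gk : k \in G by apply: (subsetP hK).
rewrite inE Gk; apply/eqP/ffunP => C; rewrite ffunE.
case: ifP => XC; last by rewrite (secP_out Ss) ?XC.
have XC' : k^-1 *: C \in lcosets H G by rewrite X_mul ?groupV.
by rewrite -fx // lcosetKV.
Qed.

Definition Fix := [set s in S G H m | K \subset stabS G H s].
Definition phi (s : secT m) : secT m :=
  [ffun D => if D \in lcosets J G then s (repr D *: H) else None].
Definition Fam (D : {set gT}) : pred (option (Aelt m)) :=
  if D \in lcosets J G then [pred o | if o is Some a then a \in fib (repr D) else false]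
  else pred1 None.

Lemma phi_fam s : s \in Fix -> phi s \in family Fam.
Proof.
rewrite inE => /andP[Ss /(fixP Ss) fx]; apply/familyP => D; rewrite /Fam ffunE.
case: ifP => // JD; have [Gr [_ XC]] := L5 JD.
have [a [sa ia pa]] := secP_in Ss XC; rewrite sa inE /= inE ia pa eqxx /=.
apply/forallP => k; apply/implyP; rewrite inE => /andP[Kk Hk].
have := fx k _ Kk XC; rewrite sa.
have -> : k *: (repr D *: H) = repr D *: H.
  by apply/eqP; rewrite fixcoset // (subsetP hH).
by rewrite sa => -[E]; rewrite {2}E.
Qed.

Lemma phi_inj : {in Fix &, injective phi}.
Proof.
move=> s1 s2 /setIdP[S1 /(fixP S1) f1] /setIdP[S2 /(fixP S2) f2] E.
apply/ffunP => C; case: (boolP (C \in lcosets H G)) => XC; last first.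
  by rewrite (secP_out S1) ?(secP_out S2).
have [_ [JD Gr]] := L1 XC; have [k Kk EC] := L2 XC.
have [_ [_ XC']] := L5 JD.
have := congr1 (fun f : secT m => f (C * J)) E; rewrite /= !ffunE JD => E'.
by rewrite EC f1 // f2 // E'.
Qed.

Definition sec (f : secT m) : secT m := [ffun C => if C \in lcosets H G then
   (if [pick k in K | C == k *: (repr (C * J) *: H)] is Some k
    then omap (actA k) (f (C * J)) else None) else None].

Lemma fam_in f D : f \in family Fam -> D \in lcosets J G ->
  exists2 a, f D = Some a & a \in fib (repr D).
Proof.
move=> /familyP /(_ D); rewrite /Fam => + JD; rewrite JD.
by case: (f D) => // a; rewrite inE => ?; exists a.
Qed.

Lemma fam_out f D : f \in family Fam -> D \notin lcosets J G -> f D = None.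
Proof.
by move=> /familyP /(_ D); rewrite /Fam => + JD; rewrite (negbTE JD) inE => /eqP.
Qed.

Lemma sec_val f C : f \in family Fam -> C \in lcosets H G ->
  exists a, exists2 k, k \in K & [/\ f (C * J) = Some a, a \in fib (repr (C * J)),
     C = k *: (repr (C * J) *: H) & sec f C = Some (actA k a)].
Proof.
move=> Ff XC; have [_ [JD Gr]] := L1 XC.
have [a fa ba] := fam_in Ff JD.
rewrite ffunE XC; case: pickP => [k /andP[Kk /eqP EC] | none].
  by exists a; exists k => //; split => //; rewrite fa.
by have [k Kk EC] := L2 XC; have := none k; rewrite Kk -EC eqxx.
Qed.

Lemma sec_S f : f \in family Fam -> sec f \in S G H m.
Proof.
move=> Ff; rewrite inE; apply/forallP => C; case: ifP => XC; last first.
  by rewrite ffunE XC.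
have [a [k Kk [fa ba EC ->]]] := sec_val Ff XC.
have Gk : k \in G by apply: (subsetP hK).
move: ba; rewrite inE => /and3P[/andP[sI /lcosetsP[y Gy Ey]] /eqP pa _].
rewrite /inA /Pr /= sI /=; apply/andP; split.
  by apply/lcosetsP; exists (k * y); rewrite ?groupM // Ey lcosetM.
by rewrite lcosetMA; rewrite /Pr in pa; rewrite pa -EC.
Qed.

Lemma fib_fixed r a : a \in fib r -> fixedA a.
Proof. by rewrite inE => /and3P[]. Qed.

Lemma sec_fix f : f \in family Fam -> sec f \in Fix.
Proof.
move=> Ff; have Ss := sec_S Ff; rewrite inE Ss /=; apply/(fixP Ss) => k0 C K0 XC.
have Gk0 : k0 \in G by apply: (subsetP hK).
have XC' := X_mul Gk0 XC.
have [a [k Kk [fa ba EC ->]]] := sec_val Ff XC.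
have [a' [k' Kk' []]] := sec_val Ff XC'.
rewrite L4 // fa => -[<-] _ EC' -> /=; congr Some; rewrite -actAM.
have [_ [_ Gr]] := L1 XC.
apply: (actA_wd (r := repr (C * J))); rewrite ?groupM //; last exact: fib_fixed ba.
by rewrite -EC' lcosetM -EC.
Qed.

Lemma phi_sec f : f \in family Fam -> phi (sec f) = f.
Proof.
move=> Ff; apply/ffunP => D; rewrite ffunE; case: ifP => JD; last first.
  by rewrite fam_out ?JD.
have [Gr [ED XC]] := L5 JD.
have [a [k Kk [fa ba EC ->]]] := sec_val Ff XC.
move: fa ba EC; rewrite ED => fa ba EC; rewrite fa; congr Some.
rewrite -{2}(actA1 a); apply: (actA_wd (r := repr D)) => //; last exact: fib_fixed ba.
by rewrite -EC lcoset1.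
Qed.

Lemma card_Fam D : #|Fam D| = if D \in lcosets J G then N0 else 1%N.
Proof.
rewrite /Fam; case: ifP => JD; last by rewrite card1.
have [Gr _] := L5 JD; rewrite -(card_fib Gr).
rewrite -(card_imset (fib (repr D)) (@Some_inj _)); apply: eq_card => -[a|] /=.
  by rewrite inE (mem_imset _ _ (@Some_inj _)).
by rewrite inE; apply/esym/imsetP => -[].
Qed.

Lemma part1 : #|Fix| = (N0 ^ #|G : J|)%N.
Proof.
rewrite -(card_in_imset phi_inj).
have -> : #|phi @: Fix| = #|(family Fam : simpl_pred (secT m))|.
  apply: eq_card => f; apply/imsetP/idP => [[s Fs ->] | Ff]; first exact: phi_fam.
  by exists (sec f); rewrite ?phi_sec ?sec_fix.
rewrite card_family_prod; under eq_bigr => D _ do rewrite card_Fam.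
by rewrite -big_mkcond prod_nat_const card_lcosets.
Qed.
End Main.

Section Part2.
Local Open Scope group_scope.
Variables (gT : finGroupType) (G H : {group gT}) (m : {group gT} -> nat).
Hypotheses (hG : abelian G) (hH : H \subset G).

Lemma stab_group s : s \in S G H m -> group_set (stabS G H s).
Proof.
move=> Ss; apply/group_setP; split.
  rewrite inE group1; apply/eqP/ffunP => C; rewrite ffunE invg1 lcoset1.
  case: ifP => XC; last by rewrite (secP_out Ss) ?XC.
  by case: (s C) => // a; rewrite /= actA1.
move=> g h; rewrite !inE => /andP[Gg /eqP Eg] /andP[Gh /eqP Eh].
rewrite groupM //; apply/eqP/ffunP => C; rewrite ffunE.
case: ifP => XC; last by rewrite (secP_out Ss) ?XC.
have XC1 : g^-1 *: C \in lcosets H G by rewrite X_mul ?groupV.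
rewrite invMg lcosetM.
have EgC : s C = omap (actA g) (s (g^-1 *: C)) by rewrite -{1}Eg ffunE XC.
have EhD : s (g^-1 *: C) = omap (actA h) (s (h^-1 *: (g^-1 *: C))).
  by rewrite -{1}Eh ffunE XC1.
by rewrite EgC EhD; case: (s _) => //= a; rewrite actAM.
Qed.
End Part2.

Theorem corollary7 (gT : finGroupType) (G H : {group gT})
  (m : {group gT} -> nat) (hG : abelian G) (hH : H \subset G) :
  forall K : {group gT}, K \subset G ->
    #|[set s in S G H m | K \subset stabS G H s]| =
      (\sum_(I : {group gT} | (K :&: H \subset I) && (I \subset H))
          m I * #|H : I|%g) ^ #|G : K <*> H|%g
    /\
    cnt G H m K =
      (\sum_(I : {group gT} | (K :&: H \subset I) && (I \subset H))
          m I * #|H : I|%g) ^ #|G : K <*> H|%g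
      - \sum_(L : {group gT} | (K \proper L) && (L \subset G)) cnt G H m L.
Proof.
move=> K hK; have P1 := part1 m hG hH hK; rewrite /Fix /N0 /= in P1.
rewrite -P1; split => //.
pose stG (s : secT m) : {group gT} := insubd [1 gT]%G (stabS G H s).
have stGE s : s \in S G H m -> (stG s : {set gT}) = stabS G H s.
  by move=> Ss; rewrite /stG insubdK //; apply: stab_group.
have sum_eq : #|[set s in S G H m | K \subset stabS G H s]| =
  \sum_(L : {group gT} | (K \subset L) && (L \subset G)) cnt G H m L.
  rewrite -sum1_card (partition_big stG (fun L : {group gT} => (K \subset L) && (L \subset G))).
    apply: eq_bigr => L /andP[KL LG]; rewrite /cnt -sum1_card; apply: eq_bigl => s.
    rewrite !inE; case Sec: (is_section G H s) => //=.
    have Ss : s \in S G H m by rewrite inE Sec.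
    rewrite -val_eqE /= stGE //.
    by case: eqP => [->|]; rewrite ?KL ?andbT ?andbF.
  move=> s; rewrite inE => /andP[Ss KS]; rewrite stGE // KS /=.
  by apply/subsetP => g; rewrite inE => /andP[].
rewrite sum_eq (bigD1 K) /= ?subxx ?hK //.
have -> : \sum_(L : {group gT} | (K \subset L) && (L \subset G) && (L != K)) cnt G H m L
   = \sum_(L : {group gT} | (K \proper L) && (L \subset G)) cnt G H m L.
  apply: eq_bigl => L; rewrite properEneq.
  case: (K \subset L); case: (L \subset G); rewrite ?andbF ?andbT //=.
  by rewrite eq_sym -val_eqE.
by rewrite addnK.
Qed.
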